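(* Let $\mathcal{A}$ and $\mathcal{B}$ be saturated fusion systems over finite $p$-groups $D$ and $E$, and let $\phi:E\to D$ be a group isomorphism inducing an isomorphism of fusion systems $\mathcal{B}\to\mathcal{A}$. Let $Q\le E$, $P=\phi(Q)$, $u\in N_D(P)$, $v\in N_E(Q)$, and suppose there exist an $\mathcal{A}$-isomorphism $\alpha:P\langle u\rangle\to\alpha(P\langle u\rangle)$ and a $\mathcal{B}$-isomorphism $\beta:Q\langle v\rangle\to\beta(Q\langle v\rangle)$ with $\alpha|_P=\phi\beta\phi^{-1}|_P$ and $\alpha(u)=\phi(\beta(v))$. Then (1) there is an $\mathcal{A}$-isomorphism $\psi:P\langle u\rangle\to P\langle\phi(v)\rangle$ with $\psi|_P=\mathrm{id}_P$ and $\psi(u)=\phi(v)$; in particular $u$ and $\phi(v)$ are $\mathcal{N}_\mathcal{A}(P)$-conjugate; (2) there is a $\mathcal{B}$-isomorphism $\omega:Q\langle v\rangle\to Q\langle\phi^{-1}(u)\rangle$ with $\omega|_Q=\mathrm{id}_Q$ and $\omega(v)=\phi^{-1}(u)$; in particular $v$ and $\phi^{-1}(u)$ are $\mathcal{N}_\mathcal{B}(Q)$-conjugate.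
   Context: $\phi$ induces an isomorphism $\mathcal{B}\to\mathcal{A}$ means $\mathrm{Hom}_\mathcal{A}(\phi(R),\phi(S))=\phi\circ\mathrm{Hom}_\mathcal{B}(R,S)\circ\phi^{-1}$ for all $R,S\le E$. $\mathcal{N}_\mathcal{A}(P)$ is the normalizer subsystem of $P$ in $\mathcal{A}$; elements $x,y$ are $\mathcal{F}$-conjugate if some $\mathcal{F}$-isomorphism $\langle x\rangle\to\langle y\rangle$ sends $x$ to $y$. *)

(* Defs.v *)
From mathcomp Require Import all_boot all_fingroup all_solvable.
Set Implicit Arguments.
Unset Strict Implicit.
Unset Printing Implicit Defensive.
Local Open Scope group_scope.

(* A fusion system over S (a subgroup of gT) is encoded by a predicate
   F P Q f  meaning "f (restricted to P) belongs to Hom_F(P, Q)".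
   Morphisms are finite functions gT -> gT; only their values on the
   domain P matter (axiom fs_ext). *)

Section Fusion.
Variable gT : finGroupType.
Implicit Types (S P Q R : {set gT}) (f g : {ffun gT -> gT}).

Definition fsys_type := {set gT} -> {set gT} -> {ffun gT -> gT} -> bool.

Definition conjf (s : gT) : {ffun gT -> gT} := [ffun x => x ^ s].

Definition compf (g f : {ffun gT -> gT}) : {ffun gT -> gT} := [ffun x => g (f x)].

Record is_fusion_system (S : {set gT}) (F : fsys_type) : Prop := {
  fs_sub : forall P Q f, F P Q f ->
    [/\ group_set P, group_set Q, P \subset S & Q \subset S];
  fs_hom : forall P Q f, F P Q f ->
    [/\ {in P &, {morph f : x y / x * y}}, {in P &, injective f}
      & f @: P \subset Q];
  fs_ext : forall P Q f g, {in P, f =1 g} -> F P Q f = F P Q g;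
  fs_conj : forall P Q s, group_set P -> group_set Q ->
    P \subset S -> Q \subset S -> s \in S -> P :^ s \subset Q ->
    F P Q (conjf s);
  fs_comp : forall P Q R f g, F P Q f -> F Q R g -> F P R (compf g f);
  fs_iso : forall P Q f, F P Q f ->
    F P (f @: P) f /\ exists2 g, F (f @: P) P g & {in P, forall x, g (f x) = x}
}.

Definition fconjugate (F : fsys_type) P Q := exists2 f, F P Q f & f @: P = Q.

Definition fully_normalized S (F : fsys_type) P :=
  forall Q, fconjugate F P Q -> #|'N_S(Q)| <= #|'N_S(P)|.

Definition fully_centralized S (F : fsys_type) P :=
  forall Q, fconjugate F P Q -> #|'C_S(Q)| <= #|'C_S(P)|.

Definition AutF (F : fsys_type) P : {set {perm gT}} :=
  [set a in Aut P | F P P [ffun x => a x]].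

Definition AutS S P : {set {perm gT}} :=
  [set a in Aut P | [exists s in 'N_S(P), [forall x in P, a x == x ^ s]]].

Definition Nphi S P f : {set gT} :=
  [set g in 'N_S(P) | [exists s in 'N_S(f @: P),
      [forall x in P, f (x ^ g) == (f x) ^ s]]].

Definition saturated_fusion_system (p : nat) S (F : fsys_type) : Prop :=
  [/\ group_set S, p.-group S, is_fusion_system S F,
   (forall P, group_set P -> P \subset S -> fully_normalized S F P ->
      fully_centralized S F P /\ p.-Sylow(AutF F P) (AutS S P))
  & (forall P f, F P S f -> fully_centralized S F (f @: P) ->
      exists2 g, F (Nphi S P f) S g & {in P, g =1 f})].

Definition normsys S (F : fsys_type) P Q R f : Prop :=
  [/\ Q \subset 'N_S(P), R \subset 'N_S(P), F Q R f &
      exists2 g, F (P <*> Q) (P <*> R) g & g @: P = P /\ {in Q, g =1 f}].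

Definition nconj S (F : fsys_type) P (x y : gT) : Prop :=
  exists2 f, normsys S F P <[x]> <[y]> f & f x = y.

End Fusion.

Definition induces_iso (gT hT : finGroupType) (E : {set hT})
  (A : fsys_type gT) (B : fsys_type hT) (phi : hT -> gT) (phi' : gT -> hT) :=
  forall R S : {set hT}, group_set R -> group_set S ->
    R \subset E -> S \subset E ->
    forall f : {ffun gT -> gT},
      A (phi @: R) (phi @: S) f <->
      exists2 g, B R S g & {in phi @: R, forall x, f x = phi (g (phi' x))}.

(* Main.v *)
Require Import Defs.
From mathcomp Require Import all_boot all_fingroup all_solvable.
Local Open Scope group_scope.
Set Warnings "-notation-overridden".
Set Implicit Arguments.
Section Img.
Variables (aT rT : finGroupType) (G : {group aT}) (f : aT -> rT).
Hypothesis fM : {in G &, {morph f : x y / x * y}}.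

Let mf : {morphism G >-> rT} := Morphism fM.

Lemma img_m (A : {set aT}) : A \subset G -> f @: A = mf @* A.
Proof. by move=> sA; rewrite morphimEsub. Qed.

Lemma img_join (H : {set aT}) x : H \subset G -> x \in G ->
  f @: (H <*> <[x]>) = f @: H <*> <[f x]>.
Proof.
move=> sH xG; have sX : <[x]> \subset G by rewrite cycle_subG.
rewrite (@img_m (H <*> <[x]>)); last by rewrite join_subG sH.
by rewrite morphimY // -img_m // morphim_cycle.
Qed.

Lemma img_cycle x : x \in G -> f @: <[x]> = <[f x]>.
Proof. by move=> xG; rewrite img_m ?cycle_subG // morphim_cycle. Qed.

Lemma img_conj (H : {set aT}) x : H \subset G -> x \in G -> f @: (H :^ x) = f @: H :^ f x.
Proof.
move=> sH xG; rewrite (@img_m (H :^ x)); last by rewrite sub_conjg conjGid ?groupV.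
by rewrite morphimJ // -img_m.
Qed.

Lemma img_group (H : {set aT}) : group_set H -> H \subset G -> group_set (f @: H).
Proof.
move=> gH sH; rewrite img_m //.
pose K := Group gH; have -> : H = K by [].
exact: groupP.
Qed.
End Img.
Arguments img_m {aT rT G f} fM A _.
Arguments img_join {aT rT G f} fM H x _ _.
Arguments img_cycle {aT rT G f} fM x _.
Arguments img_conj {aT rT G f} fM H x _ _.
Arguments img_group {aT rT G f} fM H _ _.
Lemma xin (gT : finGroupType) (H : {set gT}) x : x \in H <*> <[x]>.
Proof. by rewrite -cycle_subG joing_subr. Qed.

Lemma part1 (gT hT : finGroupType) (D : {group gT}) (E : {group hT})
  (A : fsys_type gT) (B : fsys_type hT)
  (fsA : is_fusion_system D A) (fsB : is_fusion_system E B)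
  (phi : hT -> gT) (phi' : gT -> hT)
  (phiM : {in E &, {morph phi : x y / x * y}})
  (phiK : {in E, cancel phi phi'})
  (phiE : phi @: E = D)
  (hind : induces_iso E A B phi phi')
  (Q : {set hT}) (gQ : group_set Q) (hQ : Q \subset E) (P : {set gT}) (hP : P = phi @: Q)
  (u : gT) (v : hT) (hu : u \in 'N_D(P)) (hv : v \in 'N_E(Q))
  (alpha : {ffun gT -> gT}) (beta : {ffun hT -> hT})
  (halpha : A (P <*> <[u]>) (alpha @: (P <*> <[u]>)) alpha)
  (hbeta : B (Q <*> <[v]>) (beta @: (Q <*> <[v]>)) beta)
  (hab : {in P, forall x, alpha x = phi (beta (phi' x))})
  (habu : alpha u = phi (beta v)) :
  (exists psi : {ffun gT -> gT},
      [/\ A (P <*> <[u]>) (P <*> <[phi v]>) psi,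
          psi @: (P <*> <[u]>) = P <*> <[phi v]>,
          {in P, forall x, psi x = x} & psi u = phi v])
   /\ nconj D A P u (phi v).
Proof.
have vE : v \in E by move: hv; rewrite inE => /andP[].
have uD : u \in D by move: hu; rewrite inE => /andP[].
have sGQ : Q <*> <[v]> \subset E by rewrite join_subG hQ cycle_subG.
have eGP : phi @: (Q <*> <[v]>) = P <*> <[phi v]> by rewrite (img_join phiM) // hP.
have [_ gGQ _ sT] := fs_sub fsB hbeta.
have hg : A (P <*> <[phi v]>) (phi @: (beta @: (Q <*> <[v]>)))
            [ffun x => phi (beta (phi' x))].
  rewrite -eGP; have := hind _ _ (groupP (joing_group Q <[v]>)) gGQ sGQ sT [ffun x => phi (beta (phi' x))] => /proj2; apply.
  exists beta => // x /imsetP [y yGQ ->]; rewrite ffunE phiK //.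
  exact: (subsetP sGQ).
set gam := [ffun x => _] in hg.
have [gamM _ _] := fs_hom fsA hg.
have [aM _ _] := fs_hom fsA halpha.
have gamv : gam (phi v) = alpha u by rewrite ffunE phiK.
have ealpha : alpha @: (P <*> <[u]>) = gam @: (P <*> <[phi v]>).
  rewrite (img_join aM) ?joing_subl ?xin // (img_join gamM) ?joing_subl ?xin //.
  rewrite gamv; congr (_ <*> _); apply: eq_in_imset => x xP.
  by rewrite hab // ffunE.
rewrite ealpha in halpha.
have [_ [g0 hg0 g0K]] := fs_iso fsA hg.
have hpsi := fs_comp fsA halpha hg0.
set psi := compf g0 alpha in hpsi.
have psiP : {in P, forall x, psi x = x}.
  move=> x xP; have gx : alpha x = gam x by rewrite hab // ffunE.
  by rewrite ffunE gx g0K // (subsetP (joing_subl _ _)).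
have psiu : psi u = phi v by rewrite ffunE -gamv g0K ?xin.
have [psiM psiI _] := fs_hom fsA hpsi.
have epsi : psi @: (P <*> <[u]>) = P <*> <[phi v]>.
  rewrite (img_join psiM) ?joing_subl ?xin // psiu; congr (_ <*> _).
  by rewrite -[RHS]imset_id; apply: eq_in_imset.
split; first by exists psi.
exists psi => //.
have [gPu _ sPuD _] := fs_sub fsA hpsi.
have phivD : phi v \in D by rewrite -phiE imset_f.
have phivN : phi v \in 'N_D(P).
  rewrite inE phivD /= inE hP -(img_conj phiM) //; apply: imsetS.
  by move: hv; rewrite !inE => /andP[].
split.
- by rewrite cycle_subG.
- by rewrite cycle_subG.
- have h1 : A <[u]> (P <*> <[u]>) (conjf 1).
    apply: (fs_conj fsA (groupP (cycle_group u)) gPu _ sPuD (group1 D)).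
    + by rewrite cycle_subG.
    + by rewrite conjsg1 cycle_subG xin.
  have h2 := fs_comp fsA h1 hpsi.
  have h3 : A <[u]> (P <*> <[phi v]>) psi.
    by rewrite -(fs_ext fsA _ _ (f := compf psi (conjf 1))) // => x _; rewrite !ffunE conjg1.
  have [h4 _] := fs_iso fsA h3.
  rewrite -psiu -(img_cycle psiM) ?xin //.
- exists psi => //; split => //.
  by rewrite -[RHS]imset_id; apply: eq_in_imset.
Qed.
Arguments part1 {gT hT D E A B} fsA fsB {phi phi'} phiM phiK phiE hind {Q} gQ hQ {P} hP {u v} hu hv {alpha beta} halpha hbeta hab habu.
Theorem lemma8p3 (gT hT : finGroupType) (p : nat) (hp : prime p)
  (D : {group gT}) (E : {group hT})
  (A : fsys_type gT) (B : fsys_type hT)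
  (hA : saturated_fusion_system p D A) (hB : saturated_fusion_system p E B)
  (phi : hT -> gT) (phi' : gT -> hT)
  (phiM : {in E &, {morph phi : x y / x * y}})
  (phiK : {in E, cancel phi phi'}) (phi'K : {in D, cancel phi' phi})
  (phiE : phi @: E = D)
  (hind : induces_iso E A B phi phi')
  (Q : {group hT}) (hQ : Q \subset E) (P : {set gT}) (hP : P = phi @: Q)
  (u : gT) (v : hT) (hu : u \in 'N_D(P)) (hv : v \in 'N_E(Q))
  (alpha : {ffun gT -> gT}) (beta : {ffun hT -> hT})
  (halpha : A (P <*> <[u]>) (alpha @: (P <*> <[u]>)) alpha)
  (hbeta : B (Q <*> <[v]>) (beta @: (Q <*> <[v]>)) beta)
  (hab : {in P, forall x, alpha x = phi (beta (phi' x))})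
  (habu : alpha u = phi (beta v)) :
  ((exists psi : {ffun gT -> gT},
      [/\ A (P <*> <[u]>) (P <*> <[phi v]>) psi,
          psi @: (P <*> <[u]>) = P <*> <[phi v]>,
          {in P, forall x, psi x = x} & psi u = phi v])
   /\ nconj D A P u (phi v))
  /\
  ((exists omega : {ffun hT -> hT},
      [/\ B (Q <*> <[v]>) (Q <*> <[phi' u]>) omega,
          omega @: (Q <*> <[v]>) = Q <*> <[phi' u]>,
          {in Q, forall x, omega x = x} & omega v = phi' u])
   /\ nconj E B Q v (phi' u)).
Proof.
have [_ _ fsA _ _] := hA; have [_ _ fsB _ _] := hB.
split; first exact: (part1 fsA fsB phiM phiK phiE hind (groupP Q) hQ hP hu hv
  halpha hbeta hab habu).
have phi'in : {in D, forall x, phi' x \in E}.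
  by move=> x; rewrite -phiE => /imsetP [y yE ->]; rewrite phiK.
have phi'M : {in D &, {morph phi' : x y / x * y}}.
  move=> x y; rewrite -phiE => /imsetP [a aE ->] /imsetP [b bE ->].
  by rewrite -phiM // !phiK // groupM.
have imK : forall R : {set gT}, R \subset D -> phi @: (phi' @: R) = R.
  move=> R sR; rewrite -imset_comp -[RHS]imset_id; apply: eq_in_imset => x xR.
  by rewrite /= phi'K // (subsetP sR).
have imK' : forall R : {set hT}, R \subset E -> phi' @: (phi @: R) = R.
  move=> R sR; rewrite -imset_comp -[RHS]imset_id; apply: eq_in_imset => x xR.
  by rewrite /= phiK // (subsetP sR).
have phi'E : phi' @: D = E by rewrite -phiE imK'.
have hind' : induces_iso D B A phi' phi.
  move=> R S gR gS sR sS f.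
  have gR0 := img_group phi'M R gR sR; have gS0 := img_group phi'M S gS sS.
  have sR0 : phi' @: R \subset E by rewrite -phi'E imsetS.
  have sS0 : phi' @: S \subset E by rewrite -phi'E imsetS.
  have hi := hind _ _ gR0 gS0 sR0 sS0; rewrite !imK in hi => //.
  split.
  - move=> Bf; have [_ _ fS] := fs_hom fsB Bf.
    exists [ffun x => phi (f (phi' x))].
      by apply/hi; exists f => // x _; rewrite ffunE.
    move=> x xR0; have xE := subsetP sR0 x xR0.
    have fxE : f x \in E by apply: (subsetP sS0); apply: (subsetP fS); rewrite imset_f.
    by rewrite ffunE phiK // phiK.
  - case=> g Ag hg; have [h Bh hh] := proj1 (hi g) Ag.
    have [_ _ hS] := fs_hom fsB Bh.
    rewrite (fs_ext fsB _ _ (g := h)) // => x xR0.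
    have xE := subsetP sR0 x xR0.
    have hxE : h x \in E by apply: (subsetP sS0); apply: (subsetP hS); rewrite imset_f.
    have phixR : phi x \in R by rewrite -(imK R sR) imset_f.
    by rewrite hg // hh // phiK // phiK.
have sPD : P \subset D by rewrite hP -phiE imsetS.
have gP : group_set P by rewrite hP; apply: (img_group phiM) => //; apply: groupP.
have hQ' : gval Q = phi' @: P by rewrite hP imK'.
have [_ _ bS] := fs_hom fsB hbeta.
have [_ _ _ sbE] := fs_sub fsB hbeta.
have hab' : {in Q, forall x, beta x = phi' (alpha (phi x))}.
  move=> x xQ; rewrite hab; last by rewrite hP imset_f.
  have xE : x \in E := subsetP hQ x xQ.
  have bxE : beta x \in E.
    apply: (subsetP sbE); apply: imset_f; exact: (subsetP (joing_subl _ _)).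
  by rewrite (phiK _ xE) (phiK _ bxE).
have habu' : beta v = phi' (alpha u).
  by rewrite habu phiK //; apply: (subsetP sbE); rewrite imset_f // xin.
exact: (part1 fsB fsA phi'M phi'K phi'E hind' gP sPD hQ' hv hu hbeta halpha hab' habu').
Qed.
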